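(* Let $\Sigma$ be a finite alphabet and $S\in\Sigma^m$. Then the set $\mathrm{Foc}(S)$ is a set of window representatives of length $m$.
   Context: For $S=s_0\cdots s_{m-1}$ let $p=p_1\cdots p_m=S^{\mathrm{rev}}=s_{m-1}\cdots s_0$. The factor oracle of $p$ is the deterministic automaton with states $0,\dots,m$, start state $0$, built as follows: set $\mathrm{sl}(0)=-1$; for $i=1,\dots,m$: add the transition $i-1\xrightarrow{p_i} i$; let $k=\mathrm{sl}(i-1)$; while $k\ne-1$ and $k$ has no outgoing transition labelled $p_i$, add $k\xrightarrow{p_i} i$ and set $k=\mathrm{sl}(k)$; finally $\mathrm{sl}(i)=-1$ if $k=-1$, else $\mathrm{sl}(i)$ is the target of the transition from $k$ labelled $p_i$. Missing transitions lead to a sink state FAIL. $\mathrm{Foc}(S)=\{x\in\Sigma^*: \text{the factor oracle of } S^{\mathrm{rev}} \text{ is not in FAIL after reading } x^{\mathrm{rev}}\}$. For a finite set $\mathcal{R}\subset\Sigma^*$ and $a\in\Sigma^m$, $\mathrm{rep}_\mathcal{R}(a)$ is the longest suffix of $a$ (including $\varepsilon$ and $a$) lying in $\mathcal{R}$. $\mathcal{R}$ is a set of window representatives of length $m$ if (1) every $a\in\Sigma^m$ has a suffix in $\mathcal{R}$, and (2) there is $\delta_\mathcal{R}:\mathcal{R}\times\Sigma\to\mathcal{R}$ with $\delta_\mathcal{R}(\mathrm{rep}_\mathcal{R}(a),\sigma)=\mathrm{rep}_\mathcal{R}(a_1\cdots a_{m-1}\sigma)$ for all $a\in\Sigma^m$,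 $\sigma\in\Sigma$. (Finiteness of $\mathrm{Foc}(S)$ is part of the definition being claimed.) *)

(* Defs.v *)
From mathcomp Require Import all_boot.
Set Implicit Arguments. Unset Strict Implicit. Unset Printing Implicit Defensive.

Section FactorOracle.
Variable Sigma : eqType.

(* Transition table: list of ((source, label), target); lookup = first match.
   The construction never adds two transitions with the same (source,label). *)
Definition trans_tbl := seq ((nat * Sigma) * nat).

Fixpoint lookup (tr : trans_tbl) (q : nat) (c : Sigma) : option nat :=
  match tr with
  | [::] => None
  | ((q', c'), t) :: tr' => if (q' == q) && (c' == c) then Some t else lookup tr' q c
  end.

(* Suffix links: sl is a list indexed by states, None encodes -1. *)
Definition slink (sl : seq (option nat)) (k : nat) : option nat := nth None sl k.

(* Fuel bounds the iterations (sl is strictly decreasing on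
   states < i, so fuel i+1 suffices). *)
Fixpoint oracle_loop (fuel : nat) (sl : seq (option nat)) (i : nat) (c : Sigma)
    (tr : trans_tbl) (k : option nat) : trans_tbl * option nat :=
  match fuel with
  | 0 => (tr, k)
  | fuel'.+1 =>
    match k with
    | None => (tr, None)
    | Some k' =>
      match lookup tr k' c with
      | Some _ => (tr, k)
      | None => oracle_loop fuel' sl i c (((k', c), i) :: tr) (slink sl k')
      end
    end
  end.

(* Step i (1 <= i <= m) reading letter c = p_i. *)
Definition oracle_step (i : nat) (c : Sigma) (st : trans_tbl * seq (option nat))
    : trans_tbl * seq (option nat) :=
  let: (tr, sl) := st in
  let tr1 := ((i.-1, c), i) :: tr in
  let: (tr2, k) := oracle_loop i.+1 sl i c tr1 (slink sl i.-1) in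
  let sli := match k with None => Some 0 | Some k' => lookup tr2 k' c end in
  (tr2, rcons sl sli).

Fixpoint oracle_build_from (i : nat) (p : seq Sigma) (st : trans_tbl * seq (option nat))
    : trans_tbl * seq (option nat) :=
  match p with
  | [::] => st
  | c :: p' => oracle_build_from i.+1 p' (oracle_step i c st)
  end.

(* Factor oracle of p = p_1 ... p_m: states 0..m, sl(0) = -1. *)
Definition factor_oracle (p : seq Sigma) : trans_tbl :=
  (oracle_build_from 1 p ([::], [:: None])).1.

(* Run from the start state 0; None = FAIL (sink). *)
Fixpoint run_from (tr : trans_tbl) (q : option nat) (w : seq Sigma) : option nat :=
  match w with
  | [::] => q
  | c :: w' =>
    match q with
    | None => None
    | Some q' => run_from tr (lookup tr q' c) w'
    end
  end.

Definition Foc (S : seq Sigma) : pred (seq Sigma) :=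
  fun x => run_from (factor_oracle (rev S)) (Some 0) (rev x) != None.

Definition rep (R : pred (seq Sigma)) (a : seq Sigma) : seq Sigma :=
  drop (find (fun k => R (drop k a)) (iota 0 (size a).+1)) a.

Definition window_representatives (m : nat) (R : pred (seq Sigma)) : Prop :=
  (exists l : seq (seq Sigma), forall x, R x = (x \in l)) /\
  (forall a : seq Sigma, size a = m -> exists2 k, k <= size a & R (drop k a)) /\
  (exists delta : seq Sigma -> Sigma -> seq Sigma,
      (forall r s, R r -> R (delta r s)) /\
      (forall (a : seq Sigma) (s : Sigma), size a = m ->
          delta (rep R a) s = rep R (rcons (behead a) s))).

End FactorOracle.

(* Main.v *)
Require Import Defs.
From mathcomp Require Import all_boot zify.
Set Implicit Arguments. Unset Strict Implicit. Unset Printing Implicit Defensive.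

Inductive chain (sl : seq (option nat)) : nat -> nat -> Prop :=
| ch_refl t : chain sl t t
| ch_step t j u : slink sl t = Some j -> chain sl j u -> chain sl t u.

Lemma chain_trans sl a b c : chain sl a b -> chain sl b c -> chain sl a c.
Proof. elim=> // t j u H _ IH Hc; apply: ch_step H (IH Hc). Qed.

Lemma slink_rcons sl x k j : slink sl k = Some j -> slink (rcons sl x) k = Some j.
Proof.
rewrite /slink nth_rcons; case: ifP => // Hk.
by rewrite nth_default // leqNgt Hk.
Qed.

Lemma chain_rcons sl x a b : chain sl a b -> chain (rcons sl x) a b.
Proof. elim=> [t|t j u H _ IH]; [exact: ch_refl | exact: ch_step (slink_rcons x H) IH]. Qed.

Definition ext (Sigma : eqType) (tr tr' : trans_tbl Sigma) :=
  forall q c t, lookup tr q c = Some t -> lookup tr' q c = Some t.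

Lemma ext_trans (Sigma : eqType) (a b c : trans_tbl Sigma) : ext a b -> ext b c -> ext a c.
Proof. by move=> H1 H2 q c' t /H1 /H2. Qed.

Lemma lookup_cons (Sigma : eqType) (tr : trans_tbl Sigma) k c i q a :
  lookup (((k, c), i) :: tr) q a = if (k == q) && (c == a) then Some i else lookup tr q a.
Proof. by []. Qed.

Lemma ext_cons (Sigma : eqType) (tr : trans_tbl Sigma) k c i :
  lookup tr k c = None -> ext tr (((k, c), i) :: tr).
Proof.
move=> Hn q a t Ht; rewrite lookup_cons.
case: ifP => // /andP [/eqP E1 /eqP E2]; subst; by rewrite Hn in Ht.
Qed.

Definition bnd (Sigma : eqType) (tr : trans_tbl Sigma) i :=
  forall q a t, lookup tr q a = Some t -> q < t <= i.

Lemma loop_spec (Sigma : eqType) fuel (sl : seq (option nat)) i (c : Sigma) tr k :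
  bnd tr i -> (forall j x, slink sl j = Some x -> x < j) ->
  (forall k0, k = Some k0 -> k0 < i /\ k0 < fuel) ->
  let: (tr2, k2) := oracle_loop fuel sl i c tr k in
  [/\ ext tr tr2,
      (forall q a t, lookup tr2 q a = Some t -> lookup tr q a = None ->
          [/\ a = c, t = i, q < i &
            (forall j, slink sl q = Some j -> lookup tr2 j c = Some i \/ k2 = Some j)]),
      (forall j, k = Some j -> lookup tr2 j c = Some i \/ k2 = Some j),
      (forall k', k2 = Some k' -> exists u, lookup tr k' c = Some u) &
      (forall k', k2 = Some k' -> exists2 k0, k = Some k0 & k' <= k0)].
Proof.
elim: fuel tr k => [|fuel IH] tr k Hb Hsl Hk /=.
  case: k Hk => [k0|] Hk; first by have [_] := Hk k0 erefl.
  split => //; by move=> q a t ->.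
case: k Hk => [k0|] Hk; last first.
  split => //; by move=> q a t ->.
have [Hk0i Hk0f] := Hk k0 erefl.
case Hl: (lookup tr k0 c) => [u|].
  split => //.
  - by move=> q a t ->.
  - by move=> j [->]; right.
  - by move=> k' [<-]; exists u.
  - by move=> k' [<-]; exists k0.
set tr' := ((k0, c), i) :: tr.
have Hb' : bnd tr' i.
  move=> q a t; rewrite lookup_cons; case: ifP => [/andP [/eqP <- _] [<-]|_ /Hb //].
  by apply/andP; split.
have Hk' : forall k1, slink sl k0 = Some k1 -> k1 < i /\ k1 < fuel.
  move=> k1 /Hsl; lia.
have := IH tr' (slink sl k0) Hb' Hsl Hk'.
case: (oracle_loop fuel sl i c tr' (slink sl k0)) => tr2 k2 [E2 N2 K2 O2 M2].
have E1 := ext_cons i Hl.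
split.
- exact: ext_trans E1 E2.
- move=> q a t Ht Hn.
  case Hn': (lookup tr' q a) => [t'|].
    move: Hn'; rewrite lookup_cons Hn; case: ifP => // /andP [/eqP E3 /eqP E4] [E5].
    subst q a t'.
    have H1 : lookup tr' k0 c = Some i by rewrite lookup_cons !eqxx.
    have := E2 _ _ _ H1; rewrite Ht => -[->]; split => //.
  exact: N2.
- move=> j [<-]; left; apply: E2; by rewrite lookup_cons !eqxx.
- move=> k' Hk2; have [u Hu] := O2 _ Hk2; exists u; move: Hu; rewrite lookup_cons; case: ifP => //.
  move=> /andP [/eqP E3 _]; subst k'.
  have [k1 Hk1 Hle] := M2 _ Hk2; have := Hsl _ _ Hk1; lia.
- move=> k' /M2 [k1 Hk1 Hle]; exists k0 => //; have := Hsl _ _ Hk1; lia.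
Qed.

Definition Inv (Sigma : eqType) n (tr : trans_tbl Sigma) (sl : seq (option nat)) :=
  [/\ size sl = n.+1, (forall j x, slink sl j = Some x -> x < j),
      (forall j, 0 < j <= n -> slink sl j != None), bnd tr n &
      (forall k a t j, lookup tr k a = Some t -> slink sl k = Some j ->
         exists2 u, lookup tr j a = Some u & chain sl t u)].

Lemma slink_rcons_lt sl x k : k < size sl -> slink (rcons sl x) k = slink sl k.
Proof. by move=> H; rewrite /slink nth_rcons H. Qed.

Lemma slink_rcons_last sl x : slink (rcons sl x) (size sl) = x.
Proof. by rewrite /slink nth_rcons ltnn eqxx. Qed.

Lemma step_inv (Sigma : eqType) n (c : Sigma) tr sl :
  Inv n tr sl ->
  Inv n.+1 (oracle_step n.+1 c (tr, sl)).1 (oracle_step n.+1 c (tr, sl)).2.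
Proof.
move=> [Hs Hsl Hne Hb HI].
rewrite /oracle_step -[n.+1.-1]/n.
set tr1 := ((n, c), n.+1) :: tr.
have Hn : lookup tr n c = None.
  case H: (lookup tr n c) => [t|] //; have := Hb _ _ _ H; lia.
have E01 : ext tr tr1 := ext_cons n.+1 Hn.
have Hb1 : bnd tr1 n.+1.
  move=> q a t; rewrite lookup_cons; case: ifP => [/andP [/eqP <- _] [<-]|_ /Hb]; lia.
have Hk : forall k0, slink sl n = Some k0 -> k0 < n.+1 /\ k0 < n.+2.
  move=> k0 /Hsl; lia.
have := @loop_spec Sigma n.+2 sl n.+1 c tr1 (slink sl n) Hb1 Hsl Hk.
case: oracle_loop => tr2 k2 [E2 N2 K2 O2 M2].
have HS : forall j, k2 = Some j -> exists2 u, lookup tr2 j c = Some u & u <= n.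
  move=> j Hj; have [u Hu] := O2 _ Hj; have [k0 Hk0 Hle] := M2 _ Hj.
  have Hjn : j < n by have := Hsl _ _ Hk0; lia.
  exists u; first exact: E2.
  move: Hu; rewrite lookup_cons; case: ifP => [/andP [/eqP E _]|_ /Hb]; [lia|lia].
set sli := match k2 with None => Some 0 | Some k' => lookup tr2 k' c end.
have Hsli : exists2 u, sli = Some u & u <= n.
  rewrite /sli; case E: k2 => [j|]; last by exists 0.
  by have [u Hu Hun] := HS j E; exists u.
have HC : forall j, (lookup tr2 j c = Some n.+1 \/ k2 = Some j) ->
    exists2 u, lookup tr2 j c = Some u & chain (rcons sl sli) n.+1 u.
  move=> j [H|H]; first by exists n.+1 => //; exact: ch_refl.
  have [u Hu _] := HS j H; exists u => //.
  apply: (ch_step (j := u)); last exact: ch_refl.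
  by rewrite -Hs slink_rcons_last /sli H.
split.
- by rewrite size_rcons Hs.
- move=> j x; rewrite /slink nth_rcons Hs; case: ifP => [Hj|_].
    exact: Hsl.
  case: ifP => [/eqP -> Hx|_] //.
  have [u Hu Hun] := Hsli; rewrite /slink in Hu; move: Hx; rewrite Hu => -[<-]; lia.
- move=> j Hj; case: (ltnP n j) => Hjn.
    have -> : j = size sl by lia.
    rewrite slink_rcons_last; by have [u -> _] := Hsli.
  rewrite slink_rcons_lt; last lia.
  apply: Hne; lia.
- move=> q a t Ht; case H1: (lookup tr1 q a) => [t'|].
    have := E2 _ _ _ H1; rewrite Ht => -[->]; exact: Hb1 H1.
  have [_ -> Hq _] := N2 _ _ _ Ht H1; lia.
- move=> k a t j Ht.
  have Hkt : k < n.+1.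
    case H1: (lookup tr1 k a) => [t'|].
      have := Hb1 _ _ _ H1; lia.
    by have [_ _ Hq _] := N2 _ _ _ Ht H1.
  rewrite slink_rcons_lt; last lia.
  move=> Hj.
  case H1: (lookup tr1 k a) => [t'|]; last first.
    have [Ea Et _ Hcl] := N2 _ _ _ Ht H1; subst a t; exact: HC (Hcl _ Hj).
  have := E2 _ _ _ H1; rewrite Ht => -[Et']; subst t'.
  move: H1; rewrite lookup_cons; case: ifP => [/andP [/eqP Ek /eqP Ea] [Et]|_ H0].
    subst k a t; apply: HC; exact: K2 Hj.
  have [u Hu Hch] := HI _ _ _ _ H0 Hj.
  exists u; first by apply: E2; apply: E01.
  exact: chain_rcons.
Qed.

Lemma build_inv (Sigma : eqType) (p : seq Sigma) n tr sl :
  Inv n tr sl ->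
  Inv (n + size p) (oracle_build_from n.+1 p (tr, sl)).1 (oracle_build_from n.+1 p (tr, sl)).2.
Proof.
elim: p n tr sl => [|c p IH] n tr sl H; first by rewrite /= addn0.
change (oracle_build_from n.+1 (c :: p) (tr, sl)) with (oracle_build_from n.+2 p (oracle_step n.+1 c (tr, sl))).
have := step_inv c H.
case: (oracle_step n.+1 c (tr, sl)) => tr' sl' H'.
have -> : n + size (c :: p) = n.+1 + size p by rewrite /= addnS.
exact: IH.
Qed.

Lemma oracle_inv (Sigma : eqType) (p : seq Sigma) :
  Inv (size p) (factor_oracle p) (oracle_build_from 1 p ([::], [:: None])).2.
Proof.
have H0 : Inv 0 ([::] : trans_tbl Sigma) [:: None].
  split => //; first by move=> [|j] x; rewrite /slink /= ?nth_nil.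
  by move=> j; lia.
exact: (build_inv p H0).
Qed.

Lemma run_none (Sigma : eqType) (tr : trans_tbl Sigma) w : run_from tr None w = None.
Proof. by case: w. Qed.

Lemma run_cat (Sigma : eqType) (tr : trans_tbl Sigma) q u v :
  run_from tr q (u ++ v) = run_from tr (run_from tr q u) v.
Proof.
elim: u q => [|c u IH] [q|] //=; by rewrite ?run_none.
Qed.

Lemma run_rcons (Sigma : eqType) (tr : trans_tbl Sigma) q w a :
  run_from tr q (rcons w a) =
  match run_from tr q w with None => None | Some q' => lookup tr q' a end.
Proof. by rewrite -cats1 run_cat; case: (run_from tr q w). Qed.

Lemma run_bound (Sigma : eqType) (tr : trans_tbl Sigma) m w q t :
  bnd tr m -> q <= m -> run_from tr (Some q) w = Some t -> q + size w <= t <= m.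
Proof.
move=> Hb; elim: w q => [|c w IH] q Hq /=; first by move=> [<-]; lia.
case H: (lookup tr q c) => [q'|]; last by rewrite run_none.
have := Hb _ _ _ H => Hqq /IH; lia.
Qed.

Lemma chain_lookup (Sigma : eqType) (tr : trans_tbl Sigma) sl m q u a t :
  Inv m tr sl -> chain sl q u -> lookup tr q a = Some t ->
  exists2 u', lookup tr u a = Some u' & chain sl t u'.
Proof.
move=> [_ _ _ _ HI] Hc; elim: Hc t => [q' t H|q' j u' Hj _ IH t H].
  by exists t => //; exact: ch_refl.
have [t1 Ht1 Hc1] := HI _ _ _ _ H Hj.
have [u2 Hu2 Hc2] := IH _ Ht1.
exists u2 => //; exact: chain_trans Hc1 Hc2.
Qed.

Lemma chain0 (Sigma : eqType) (tr : trans_tbl Sigma) sl m t :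
  Inv m tr sl -> t <= m -> chain sl t 0.
Proof.
move=> [_ Hsl Hne _ _].
elim/ltn_ind: t => t IH; case: t IH => [|t] IH Ht; first exact: ch_refl.
have H1 : slink sl t.+1 != None by apply: Hne; lia.
case E: (slink sl t.+1) H1 => [x|] // _.
have Hx := Hsl _ _ E.
apply: (ch_step E); apply: IH; lia.
Qed.

Lemma run_suffix (Sigma : eqType) (tr : trans_tbl Sigma) sl m c w t :
  Inv m tr sl -> run_from tr (Some 0) (c :: w) = Some t ->
  exists2 u, run_from tr (Some 0) w = Some u & chain sl t u.
Proof.
move=> HInv; elim/last_ind: w t => [|w a IH] t.
  move=> /= Ht; exists 0 => //; apply: (chain0 HInv).
  have [_ _ _ Hb _] := HInv; have := Hb _ _ _ Ht; lia.
rewrite -rcons_cons !run_rcons.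
case E: (run_from tr (Some 0) (c :: w)) => [q|] // Hl.
have [u Hu Hc] := IH _ E.
rewrite Hu.
exact: chain_lookup HInv Hc Hl.
Qed.
Lemma drop_size_eq (T : Type) (a : seq T) i j :
  size (drop i a) = size (drop j a) -> drop i a = drop j a.
Proof.
rewrite !size_drop => H.
case: (leqP (size a) i) => Hi.
  rewrite (drop_oversize Hi) drop_oversize //; lia.
have -> : j = i by lia. by [].
Qed.

Lemma rep_find (T : eqType) (R : pred (seq T)) a : R [::] ->
  let k := find (fun k => R (drop k a)) (iota 0 (size a).+1) in
  k <= size a /\ R (drop k a) /\ forall j, j < k -> ~~ R (drop j a).
Proof.
move=> R0 k.
have Hh : has (fun k => R (drop k a)) (iota 0 (size a).+1).
  apply/hasP; exists (size a); first by rewrite mem_iota; lia.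
  by rewrite drop_oversize.
have Hk : k < (size a).+1.
  by rewrite -(size_iota 0 (size a).+1) -has_find.
split; first lia.
split.
  have := nth_find 0 Hh. rewrite nth_iota //.
move=> j Hj. have := before_find 0 Hj. rewrite nth_iota; last lia.
by move=> ->.
Qed.

Lemma rep_drop (T : eqType) (R : pred (seq T)) a : R [::] ->
  exists2 k, k <= size a & rep R a = drop k a.
Proof.
move=> R0; have [H _] := rep_find a R0.
by exists (find (fun k => R (drop k a)) (iota 0 (size a).+1)).
Qed.

Lemma rep_in (T : eqType) (R : pred (seq T)) a : R [::] -> R (rep R a).
Proof. move=> R0; have [_ [H _]] := rep_find a R0; exact H. Qed.

Lemma rep_max (T : eqType) (R : pred (seq T)) a j : R [::] ->
  R (drop j a) -> size (drop j a) <= size (rep R a).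
Proof.
move=> R0 Hj; have [Hk [_ Hb]] := rep_find a R0.
rewrite /rep.
set k := find _ _ in Hk Hb *.
case: (ltnP j k) => Hjk.
  by have := Hb j Hjk; rewrite Hj.
rewrite !size_drop; lia.
Qed.

Lemma rep_uniq (T : eqType) (R : pred (seq T)) a y k : R [::] ->
  R y -> y = drop k a -> (forall j, R (drop j a) -> size (drop j a) <= size y) ->
  rep R a = y.
Proof.
move=> R0 Ry Hy Hmax.
have [k' _ Hr] := rep_drop a R0.
rewrite Hr Hy; apply: drop_size_eq.
apply/eqP; rewrite eqn_leq; apply/andP; split.
  by rewrite -Hy; apply: Hmax; rewrite -Hr; apply: rep_in.
by rewrite -Hr; apply: rep_max => //; rewrite -Hy.
Qed.

Lemma rep_transfer (T : eqType) (R : pred (seq T)) u w2 : R [::] ->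
  size (rep R (u ++ w2)) <= size w2 -> rep R (u ++ w2) = rep R w2.
Proof.
move=> R0 Hs. symmetry.
have [k Hk Hr] := rep_drop (u ++ w2) R0.
apply: (@rep_uniq _ _ _ _ (k - size u)) => //.
- exact: rep_in.
- rewrite Hr. have -> : drop (k - size u) w2 = drop (k - size u + size u) (u ++ w2).
    by rewrite -drop_drop drop_size_cat.
  apply: drop_size_eq. rewrite -Hr. move: Hs; rewrite Hr !size_drop size_cat; lia.
- move=> j Rj. have E : drop j w2 = drop (j + size u) (u ++ w2).
    by rewrite -drop_drop drop_size_cat.
  rewrite E. apply: rep_max => //. by rewrite -E.
Qed.

Fixpoint words (T : finType) (n : nat) : seq (seq T) :=
  match n with
  | 0 => [:: [::]]
  | n'.+1 => [::] :: [seq c :: w | c <- enum T, w <- words T n']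
  end.

Lemma words_ok (T : finType) n (w : seq T) : size w <= n -> w \in words T n.
Proof.
elim: n w => [|n IH] [|c w] //=; try by rewrite inE.
move=> Hs; rewrite inE; apply/orP; right.
  apply/allpairsP; exists (c, w) => /=; split => //.
  + by rewrite mem_enum.
  + exact: IH.
Qed.

Lemma abstract_wr (T : finType) (R : pred (seq T)) m :
  R [::] -> (forall x s, R (rcons x s) -> R x) -> (forall x, R x -> size x <= m) ->
  window_representatives m R.
Proof.
move=> R0 Rrc Rsz.
split.
  exists (filter R (words T m)) => x; rewrite mem_filter.
  case Rx: (R x) => //=; symmetry; apply: words_ok; exact: Rsz.
split.
  by move=> a _; exists (size a) => //; rewrite drop_oversize.
exists (fun r s => rep R (rcons r s)); split.
  move=> r s _; exact: rep_in.
move=> [|x b] s Ha /=.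
  by [].
have [k Hk Hr] := rep_drop (x :: b) R0.
rewrite Hr.
case: k Hk Hr => [|k'] Hk Hr.
  rewrite drop0 rcons_cons -cat1s rep_transfer //.
  rewrite size_rcons; have := Rsz _ (rep_in ([:: x] ++ rcons b s) R0); rewrite -Ha /=; lia.
rewrite /= in Hk *.
have -> : rcons b s = take k' b ++ rcons (drop k' b) s.
  by rewrite -!cats1 catA cat_take_drop.
symmetry; rewrite rep_transfer //.
have [j Hj Hrj] := rep_drop (take k' b ++ rcons (drop k' b) s) R0.
rewrite -(cats1 (drop k' b)) catA cat_take_drop cats1 in Hj Hrj *.
rewrite size_cat addn1.
case: (ltnP j (size b)) => Hjb.
  have Rin := rep_in (rcons b s) R0.
  rewrite Hrj drop_rcons in Rin *; last lia.
  have Rd := Rrc _ _ Rin.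
  have := @rep_max _ R (x :: b) j.+1 R0. rewrite /= Rd => /(_ isT).
  rewrite Hr /= size_rcons !size_drop; lia.
rewrite Hrj size_drop size_rcons; lia.
Qed.

Theorem lemma20 (Sigma : finType) (S : seq Sigma) :
  window_representatives (size S) (Foc S).
Proof.
have HInv := oracle_inv (rev S).
rewrite size_rev in HInv.
set tr := factor_oracle (rev S) in HInv.
apply: abstract_wr.
- by [].
- move=> x s; rewrite /Foc rev_rcons -/tr.
  case E: (run_from tr (Some 0) (s :: rev x)) => [t|] // _.
  by have [u -> _] := run_suffix HInv E.
- move=> x; rewrite /Foc -/tr.
  case E: (run_from tr (Some 0) (rev x)) => [t|] // _.
  have [_ _ _ Hb _] := HInv.
  have := run_bound Hb (leq0n _) E; rewrite size_rev add0n => /andP [H1 H2]; exact: leq_trans H1 H2.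
Qed.
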